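(* Let $\alpha$ be a countable ordinal and let $P\in\mathbb{J}_\alpha$. If $P$ is embeddable in $[\omega]^{<\omega}$ by a map preserving finite joins, then there is a sierpinskisation $S$ of $\alpha$ and $\omega$ such that $I_{<\omega}(S)\in\mathbb{J}_\alpha$ and $I_{<\omega}(S)$ is embeddable in $P$ by a map preserving finite joins.
   Context: $\mathbb{J}_\alpha$ is the class of join-semilattices $P$ with a least element such that the lattice $J(P)$ of ideals (non-empty up-directed initial segments, ordered by inclusion) of $P$ contains a chain of order type $I(\alpha)$, the type of the chain of all initial segments of a chain of type $\alpha$. $[\omega]^{<\omega}$ is the set of finite subsets of $\mathbb{N}$ ordered by inclusion. A sierpinskisation of $\alpha$ and $\omega$ is a poset whose order is the intersection of two linear orders on its underlying set, one of type $\alpha$ and one of type $\omega$. $I_{<\omega}(S)$ is the set of finitely generated initial segments of $S$ ordered by inclusion. A map preserves finite joins if $f(\bigvee X)=\bigvee f(X)$ for every finite $X$ (including $X=\emptyset$). *)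

(* Defs.v *)
From Stdlib Require Import List.
From mathcomp Require Import all_boot.
From mathcomp Require Import finmap.

Set Implicit Arguments.
Unset Strict Implicit.
Unset Printing Implicit Defensive.

Definition po_axioms {T : Type} (le : T -> T -> Prop) : Prop :=
  (forall x, le x x) /\
  (forall x y, le x y -> le y x -> x = y) /\
  (forall x y z, le x y -> le y z -> le x z).

Definition is_lub {T : Type} (le : T -> T -> Prop) (x y z : T) : Prop :=
  le x z /\ le y z /\ (forall w, le x w -> le y w -> le z w).

Definition is_least {T : Type} (le : T -> T -> Prop) (b : T) : Prop :=
  forall x, le b x.

Definition join_semilattice_bot {T : Type} (le : T -> T -> Prop) : Prop :=
  po_axioms le /\
  (forall x y, exists z, is_lub le x y z) /\
  (exists b, is_least le b).

Definition ideal {T : Type} (le : T -> T -> Prop) (I : T -> Prop) : Prop :=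
  (exists x, I x) /\
  (forall x y, le x y -> I y -> I x) /\
  (forall x y, I x -> I y -> exists z, I z /\ le x z /\ le y z).

(* A countably infinite ordinal alpha is represented by a strict well-order
   [lt] on nat (the chain (nat, lt) has order type alpha). *)
Definition strict_well_order (lt : nat -> nat -> Prop) : Prop :=
  (forall x, ~ lt x x) /\
  (forall x y z, lt x y -> lt y z -> lt x z) /\
  (forall x y, x <> y -> lt x y \/ lt y x) /\
  well_founded lt.

(* initial segments of the chain alpha; I(alpha) = these, ordered by inclusion *)
Definition initial_segment (lt : nat -> nat -> Prop) (A : nat -> Prop) : Prop :=
  forall x y, lt x y -> A y -> A x.

(* P = (T, le) belongs to J_alpha: P is a join-semilattice with a least
   element and J(P) contains a chain of type I(alpha), i.e. there is an
   order embedding of I(alpha) into (J(P), inclusion). *)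
Definition in_J (lt : nat -> nat -> Prop) {T : Type} (le : T -> T -> Prop) : Prop :=
  join_semilattice_bot le /\
  exists F : (nat -> Prop) -> (T -> Prop),
    (forall A, initial_segment lt A -> ideal le (F A)) /\
    (forall A B, initial_segment lt A -> initial_segment lt B ->
       ((forall n, A n -> B n) <-> (forall p, F A p -> F B p))).

(* order embedding preserving finite joins (binary joins and the empty join) *)
Definition join_embedding {T1 T2 : Type} (le1 : T1 -> T1 -> Prop)
    (le2 : T2 -> T2 -> Prop) (f : T1 -> T2) : Prop :=
  (forall x y, le1 x y <-> le2 (f x) (f y)) /\
  (forall x y z, is_lub le1 x y z -> is_lub le2 (f x) (f y) (f z)) /\
  (forall b, is_least le1 b -> is_least le2 (f b)).

Definition fin_subsets_le (A B : {fset nat}) : Prop := fsubset A B.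

(* (X, le) is a sierpinskisation of alpha and omega: le is the intersection
   of a linear order L1 of type alpha and a linear order L2 of type omega. *)
Definition sierpinskisation (lt : nat -> nat -> Prop) (X : Type)
    (le : X -> X -> Prop) : Prop :=
  exists L1 L2 : X -> X -> Prop,
    (exists f : X -> nat, bijective f /\
        forall x y, L1 x y <-> (f x = f y \/ lt (f x) (f y))) /\
    (exists g : X -> nat, bijective g /\
        forall x y, L2 x y <-> (g x <= g y)%N) /\
    (forall x y, le x y <-> (L1 x y /\ L2 x y)).

Definition fg_initial {X : Type} (le : X -> X -> Prop) (A : X -> Prop) : Prop :=
  exists s : list X, forall x, A x <-> exists y, List.In y s /\ le x y.

Definition Ifin {X : Type} (le : X -> X -> Prop) : Type :=
  {A : X -> Prop | fg_initial le A}.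

Definition Ifin_le {X : Type} (le : X -> X -> Prop) (A B : Ifin le) : Prop :=
  forall x, proj1_sig A x -> proj1_sig B x.

Arguments sierpinskisation lt X le : clear implicits.
Arguments Ifin_le {X} le A B.
Arguments Ifin {X} le.

(* Main.v *)
Require Import Defs.
From mathcomp Require Import all_boot.
From mathcomp Require Import finmap.
From Stdlib Require Import Classical ClassicalEpsilon FunctionalExtensionality PropExtensionality ProofIrrelevance.
Set Implicit Arguments. Unset Strict Implicit. Unset Printing Implicit Defensive.


Definition codeS (s : seq nat) : nat := \sum_(i <- s) 2 ^ i.

Lemma codeS_cons a s : codeS (a :: s) = 2 ^ a + codeS s.
Proof. by rewrite /codeS big_cons. Qed.

Lemma codeS_rem N s : uniq s ->
  codeS s = (N \in s) * 2 ^ N + codeS [seq x <- s | x != N].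
Proof.
move=> us; rewrite /codeS big_filter.
case: (boolP (N \in s)) => Ns.
  by rewrite (bigD1_seq N) //= mul1n.
rewrite mul0n add0n big_seq_cond [in RHS]big_seq_cond; apply: eq_bigl => x.
by case: (boolP (x \in s)) => //= xs; apply/esym/eqP => xN; rewrite -xN xs in Ns.
Qed.

Lemma codeS_lt x s : uniq s -> all (fun i => i < x) s -> codeS s < 2 ^ x.
Proof.
elim: x s => [|x IH] s us als.
  by case: s als us => [|a s] //=; rewrite /codeS big_nil.
rewrite (codeS_rem x us) expnS mul2n -addnn.
have h1 : codeS [seq i <- s | i != x] < 2 ^ x.
  apply: IH; first exact: filter_uniq.
  apply/allP => i; rewrite mem_filter => /andP [ix iis].
  by move/allP: als => /(_ i iis); rewrite ltnS leq_eqVlt (negbTE ix).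
case: (x \in s); rewrite ?mul1n ?mul0n.
  by rewrite ltn_add2l.
by apply: (leq_trans h1); rewrite leq_addr.
Qed.

Lemma codeS_inj N s1 s2 : uniq s1 -> uniq s2 ->
  all (fun i => i < N) s1 -> all (fun i => i < N) s2 ->
  codeS s1 = codeS s2 -> s1 =i s2.
Proof.
elim: N s1 s2 => [|N IH] s1 s2 u1 u2 a1 a2 e.
  by case: s1 a1 u1 e => [|? ?] //; case: s2 a2 u2 => [|? ?].
have af : forall s, all (fun i => i < N.+1) s ->
    all (fun i => i < N) [seq x <- s | x != N].
  move=> s als; apply/allP => i; rewrite mem_filter => /andP [ix iis].
  by move/allP: als => /(_ i iis); rewrite ltnS leq_eqVlt (negbTE ix).
have l1 := codeS_lt (filter_uniq (fun x => x != N) u1) (af _ a1).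
have l2 := codeS_lt (filter_uniq (fun x => x != N) u2) (af _ a2).
move: e; rewrite (codeS_rem N u1) (codeS_rem N u2).
case E1: (N \in s1); case E2: (N \in s2); rewrite ?mul1n ?mul0n ?add0n.
- move/addnI => e x; have := IH _ _ (filter_uniq _ u1) (filter_uniq _ u2)
     (af _ a1) (af _ a2) e x.
  rewrite !mem_filter; case: (eqVneq x N) => [->|] //=; by rewrite E1 E2.
- by move=> e; move: l2; rewrite -e ltnNge leq_addr.
- by move=> e; move: l1; rewrite e ltnNge leq_addr.
- move=> e x; have := IH _ _ (filter_uniq _ u1) (filter_uniq _ u2)
     (af _ a1) (af _ a2) e x.
  rewrite !mem_filter; case: (eqVneq x N) => [->|] //=; by rewrite E1 E2.
Qed.

Lemma codeS_mem x s : uniq s -> x \in s -> 2 ^ x <= codeS s.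
Proof. by move=> us xs; rewrite (codeS_rem x us) xs mul1n leq_addr. Qed.

Lemma codeS_bound s : uniq s -> all (fun i => i < (codeS s).+1) s.
Proof.
move=> us; apply/allP => i iis; rewrite ltnS.
apply: leq_trans (codeS_mem us iis); apply: ltnW; exact: ltn_expl.
Qed.

Lemma codeS_inj2 s1 s2 : uniq s1 -> uniq s2 -> codeS s1 = codeS s2 -> s1 =i s2.
Proof.
move=> u1 u2 e; apply: (codeS_inj (N := (codeS s1).+1)) => //.
  exact: codeS_bound.
by rewrite e; apply: codeS_bound.
Qed.

Lemma codeS_mono s1 s2 : uniq s1 -> uniq s2 -> {subset s1 <= s2} -> codeS s1 <= codeS s2.
Proof.
elim: s1 s2 => [|a s1 IH] s2 u1 u2 sub; first by rewrite /codeS big_nil.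
have as2 : a \in s2 by apply: sub; rewrite inE eqxx.
rewrite codeS_cons (codeS_rem a u2) as2 mul1n leq_add2l.
move: u1 => /= /andP [nas1 u1].
apply: IH => //; first exact: filter_uniq.
move=> x xs1; rewrite mem_filter; apply/andP; split.
  by apply/eqP => xa; rewrite -xa xs1 in nas1.
by apply: sub; rewrite inE xs1 orbT.
Qed.

Section Main.
Variables (lt : nat -> nat -> Prop).
Hypothesis lt_irr : forall x, ~ lt x x.
Hypothesis lt_trans : forall x y z, lt x y -> lt y z -> lt x z.
Hypothesis lt_total : forall x y, x <> y -> lt x y \/ lt y x.
Hypothesis lt_wf : well_founded lt.
Variables (T : Type) (le : T -> T -> Prop).
Hypothesis HJ : forall x y, exists z, is_lub le x y z.
Hypothesis Hbot : exists b, is_least le b.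
Variable F : (nat -> Prop) -> (T -> Prop).
Hypothesis HFid : forall A, initial_segment lt A -> ideal le (F A).
Hypothesis HFiff : forall A B, initial_segment lt A -> initial_segment lt B ->
       ((forall n, A n -> B n) <-> (forall p, F A p -> F B p)).
Variable f0 : T -> {fset nat}.
Hypothesis Hf0 : join_embedding le fin_subsets_le f0.

Lemma le_mem x z : le x z <-> (forall n, n \in f0 x -> n \in f0 z).
Proof.
case: Hf0 => [H _]; rewrite H /fin_subsets_le; split.
  by move/fsubsetP.
by move=> h; apply/fsubsetP.
Qed.

Definition join x y : T := proj1_sig (constructive_indefinite_description _ (HJ x y)).
Definition bot : T := proj1_sig (constructive_indefinite_description _ Hbot).

Lemma mem_join n x y : (n \in f0 (join x y)) = (n \in f0 x) || (n \in f0 y).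
Proof.
rewrite /join; case: (constructive_indefinite_description _ _) => z Hz /=.
case: Hf0 => [_ [H _]]; case: (H _ _ _ Hz) => [h1 [h2 h3]].
have e : f0 z = (f0 x `|` f0 y)%fset.
  apply/eqP; rewrite eqEfsubset; apply/andP; split.
    by apply: h3; [apply: fsubsetUl | apply: fsubsetUr].
  by rewrite fsubUset; apply/andP.
by rewrite e in_fsetU.
Qed.

Lemma mem_bot n : (n \in f0 bot) = false.
Proof.
rewrite /bot; case: (constructive_indefinite_description _ _) => z Hz /=.
case: Hf0 => [_ [_ H]]; have := H _ Hz fset0; rewrite /fin_subsets_le.
by move/fsubsetP/(_ n); case: (n \in f0 z) => //; move/(_ isT).
Qed.

Definition bj (l : seq T) : T := foldr join bot l.

Lemma mem_bj n l : n \in f0 (bj l) <-> exists2 x, List.In x l & n \in f0 x.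
Proof.
elim: l => [|x l IH] /=.
  by rewrite mem_bot; split => // [[]].
rewrite mem_join; split.
  case/orP => [h|/IH [z zl h]]; first by exists x => //; left.
  by exists z => //; right.
case=> z [<-|zl] h; first by rewrite h.
by apply/orP; right; apply/IH; exists z.
Qed.

Lemma In_map (A : eqType) (B : Type) (g : A -> B) (s : seq A) x : x \in s -> List.In (g x) (map g s).
Proof.
elim: s => [|z s IH] //=; rewrite inE => /orP [/eqP ->|h]; [by left | by right; apply: IH].
Qed.

Lemma In_map2 (A : eqType) (B : Type) (g : A -> B) (s : seq A) y :
  List.In y (map g s) -> exists2 x, x \in s & y = g x.
Proof.
elim: s => [|z s IH] //= [<-|h]; first by exists z; rewrite ?inE ?eqxx.
by case: (IH h) => x xs ->; exists x; rewrite // inE xs orbT.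
Qed.

Section Ideal.
Variable I : T -> Prop.
Hypothesis HI : ideal le I.

Lemma ideal_down x y : le x y -> I y -> I x.
Proof. by case: HI => _ [h _]; apply: h. Qed.

Lemma ideal_join x y : I x -> I y -> I (join x y).
Proof.
case: HI => _ [_ h] Ix Iy; case: (h _ _ Ix Iy) => z [Iz [xz yz]].
apply: (ideal_down _ Iz); apply/le_mem => n; rewrite mem_join.
by case/orP; [move: xz | move: yz]; move/le_mem; apply.
Qed.

Lemma ideal_bot : I bot.
Proof.
case: HI => [[x Ix] _]; apply: (ideal_down _ Ix); apply/le_mem => n.
by rewrite mem_bot.
Qed.

Lemma ideal_bj l : (forall x, List.In x l -> I x) -> I (bj l).
Proof.
elim: l => [|x l IH] h /=; first exact: ideal_bot.
apply: ideal_join; first by apply: h; left.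
by apply: IH => z zl; apply: h; right.
Qed.
End Ideal.



Definition Aless b := fun x => lt x b.
Definition Ale b := fun x => x = b \/ lt x b.
Lemma Aless_init b : initial_segment lt (Aless b).
Proof. by move=> x y h1 h2; apply: lt_trans h1 h2. Qed.
Lemma Ale_init b : initial_segment lt (Ale b).
Proof. by move=> x z h1 [e|h2]; right; [rewrite -e|apply: lt_trans h1 h2]. Qed.

Definition K b := F (Aless b).
Definition J b := F (Ale b).
Lemma K_ideal b : ideal le (K b). Proof. by apply: HFid; apply: Aless_init. Qed.
Lemma J_ideal b : ideal le (J b). Proof. by apply: HFid; apply: Ale_init. Qed.

Lemma J_sub_K b c p : lt b c -> J b p -> K c p.
Proof.
move=> bc Jp; apply: (proj1 (@HFiff _ _ (@Ale_init b) (@Aless_init c)) _ p Jp).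
by move=> n [->|h] //; apply: lt_trans h bc.
Qed.

Lemma J_mono b c p : b = c \/ lt b c -> J b p -> J c p.
Proof.
move=> bc Jp; apply: (proj1 (@HFiff _ _ (@Ale_init b) (@Ale_init c)) _ p Jp).
move=> n [->|h]; first by [].
by right; case: bc => [<-|bc] //; apply: lt_trans h bc.
Qed.

Lemma J_not_K b : exists p, J b p /\ ~ K b p.
Proof.
apply: NNPP => h.
have : forall p, J b p -> K b p.
  by move=> p Jp; apply: NNPP => Kp; apply: h; exists p.
move/(proj2 (@HFiff _ _ (@Ale_init b) (@Aless_init b)))/(_ b (or_introl erefl)).
exact: lt_irr.
Qed.

Definition t b : T := proj1_sig (constructive_indefinite_description _ (J_not_K b)).
Lemma t_J b : J b (t b).
Proof. exact: (proj1 (proj2_sig (constructive_indefinite_description _ (J_not_K b)))). Qed.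
Lemma t_K b : ~ K b (t b).
Proof. exact: (proj2 (proj2_sig (constructive_indefinite_description _ (J_not_K b)))). Qed.

Lemma y_ex b : exists y, y \in f0 (t b) /\ forall k, K b k -> y \notin f0 k.
Proof.
apply: NNPP => h.
have H1 : forall y, y \in f0 (t b) -> exists k, K b k /\ y \in f0 k.
  move=> y yt; apply: NNPP => h2; apply: h; exists y; split => // k Kk.
  by apply/negP => yk; apply: h2; exists k.
have H2 : forall l : seq nat, {subset l <= f0 (t b)} ->
    exists k, K b k /\ forall y, y \in l -> y \in f0 k.
  elim=> [|a l IH] sub.
    by exists bot; split => //; apply: ideal_bot; apply: K_ideal.
  case: IH => [z zl|k1 [Kk1 hk1]]; first by apply: sub; rewrite inE zl orbT.
  case: (H1 a) => [|k2 [Kk2 hk2]]; first by apply: sub; rewrite inE eqxx.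
  exists (join k1 k2); split; first by apply: ideal_join => //; apply: K_ideal.
  by move=> y; rewrite inE mem_join => /orP [/eqP ->|/hk1 ->]; rewrite ?hk2 ?orbT.
case: (H2 (f0 (t b))) => // k [Kk hk].
apply: (t_K (b := b)); apply: (ideal_down (K_ideal b) _ Kk).
by apply/le_mem.
Qed.

Definition y b : nat := proj1_sig (constructive_indefinite_description _ (y_ex b)).
Lemma y_t b : y b \in f0 (t b).
Proof. exact: (proj1 (proj2_sig (constructive_indefinite_description _ (y_ex b)))). Qed.
Lemma y_K b k : K b k -> y b \notin f0 k.
Proof. exact: (proj2 (proj2_sig (constructive_indefinite_description _ (y_ex b))) k). Qed.

Lemma Yprop d e u : J e u -> y d \in f0 u -> d = e \/ lt d e.
Proof.
move=> Ju yu; apply: NNPP => h.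
have [de ed] : d <> e /\ ~ lt d e by split => h2; apply: h; [left|right].
case: (lt_total de) => // h2.
by move: (y_K (J_sub_K h2 Ju)); rewrite yu.
Qed.

Lemma y_inj d e : y d = y e -> d = e.
Proof.
move=> yde; apply: NNPP => de.
case: (lt_total de) => h.
  by move: (y_K (J_sub_K h (t_J d))); rewrite -yde y_t.
by move: (y_K (J_sub_K h (t_J e))); rewrite yde y_t.
Qed.

Definition pick e x : option {d | y d = x /\ lt d e} :=
  match excluded_middle_informative (exists d, y d = x /\ lt d e) with
  | left H => Some (constructive_indefinite_description _ H)
  | right _ => None
  end.

Definition pstep e (rec : forall d, lt d e -> T) : T :=
  join (t e) (bj (map (fun x => match pick e x with
                               | Some (exist d H) => rec d (proj2 H)
                               | None => bot end) (f0 (t e)))).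

Definition pp : nat -> T := Fix lt_wf (fun _ => T) pstep.

Lemma pp_eq e : pp e = @pstep e (fun d _ => pp d).
Proof.
rewrite /pp Fix_eq // => x f g h; rewrite /pstep; congr join; congr bj.
by apply: eq_map => z; case: (pick x z) => [[d H]|].
Qed.

Lemma pp_J e : J e (pp e).
Proof.
move: e; apply: (well_founded_ind lt_wf) => e IH; rewrite pp_eq /pstep.
apply: ideal_join; [exact: J_ideal | exact: t_J|].
apply: ideal_bj; first exact: J_ideal.
move=> z hz; case: (In_map2 hz) => x _ zx; subst z; case: (pick e x) => [[d Hd]|] /=.
  by apply: (J_mono (or_intror (proj2 Hd))); apply: IH; exact: (proj2 Hd).
by apply: ideal_bot; apply: J_ideal.
Qed.

Lemma t_le_pp e : le (t e) (pp e).
Proof. by apply/le_mem => n; rewrite pp_eq /pstep mem_join => ->. Qed.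

Lemma pp_K e : ~ K e (pp e).
Proof. by move=> h; apply: (t_K (b := e)); apply: (ideal_down (K_ideal e) (t_le_pp e)). Qed.

Lemma closure d e : y d \in f0 (t e) -> d <> e -> le (pp d) (pp e).
Proof.
move=> yt de.
have lde : lt d e by case: (Yprop (t_J e) yt).
apply/le_mem => n hn; rewrite pp_eq /pstep mem_join; apply/orP; right.
have yt' : y d \in (f0 (t e) : seq nat) by [].
apply/mem_bj; eexists; first by apply: (In_map _ yt').
rewrite /pick; case: (excluded_middle_informative _) => [H|H]; last first.
  by exfalso; apply: H; exists d.
case: (constructive_indefinite_description _ _) => d' [e1 e2] /=.
by rewrite (y_inj e1).
Qed.

Definition kappa e : nat := codeS (f0 (pp e)).

Lemma kappa_mono d e : le (pp d) (pp e) -> kappa d <= kappa e.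
Proof.
move/le_mem => h; apply: codeS_mono; try exact: fset_uniq.
by move=> x; apply: h.
Qed.

Lemma kappa_inj d e : kappa d = kappa e -> d = e.
Proof.
move=> h; have eq := codeS_inj2 (fset_uniq _) (fset_uniq _) h.
have l1 : le (pp d) (pp e) by apply/le_mem => n; have := eq n; rewrite /= => <-.
have l2 : le (pp e) (pp d) by apply/le_mem => n; have := eq n; rewrite /= => ->.
apply: NNPP => de; case: (lt_total de) => h2.
  by apply: (pp_K (e := e)); apply: (ideal_down (K_ideal e) l2); apply: J_sub_K h2 (pp_J d).
by apply: (pp_K (e := d)); apply: (ideal_down (K_ideal d) l1); apply: J_sub_K h2 (pp_J e).
Qed.

Lemma kappa_unbounded N : exists e, N < kappa e.
Proof.
apply: NNPP => h.
have hb : forall e, kappa e < N.+1.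
  by move=> e; rewrite ltnS leqNgt; apply/negP => h2; apply: h; exists e.
pose g (i : 'I_N.+2) : 'I_N.+1 := Ordinal (hb i).
have gi : injective g.
  by move=> i j /(congr1 val) /= /kappa_inj /val_inj.
by have := leq_card g gi; rewrite !card_ord ltnn.
Qed.

Definition C n := exists e, kappa e = n.
Definition Cb n : bool := if excluded_middle_informative (C n) then true else false.
Lemma CbP n : reflect (C n) (Cb n).
Proof. by rewrite /Cb; case: (excluded_middle_informative _) => h; constructor. Qed.

Lemma next_ex n : exists m, Cb m && (n <= m).
Proof.
case: (kappa_unbounded n) => e he; exists (kappa e).
by rewrite (ltnW he) andbT; apply/CbP; exists e.
Qed.

Lemma nextC_ex n : exists m, C m /\ n <= m /\ forall k, C k -> n <= k -> m <= k.
Proof.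
case: (ex_minnP (next_ex n)) => m /andP [/CbP h1 h2] h3; exists m; split => //; split => //.
by move=> k /CbP hk nk; apply: h3; rewrite hk nk.
Qed.

Definition nextC n : nat := proj1_sig (constructive_indefinite_description _ (nextC_ex n)).

Lemma nextC_spec n : C (nextC n) /\ n <= nextC n /\ forall m, C m -> n <= m -> nextC n <= m.
Proof. exact: (proj2_sig (constructive_indefinite_description _ (nextC_ex n))). Qed.

Arguments nextC : simpl never.
Fixpoint en k := if k is j.+1 then nextC (en j).+1 else nextC 0.
Lemma en0 : en 0 = nextC 0. Proof. by []. Qed.
Lemma enS k : en k.+1 = nextC (en k).+1. Proof. by []. Qed.
Arguments en : simpl never.

Lemma en_C k : C (en k).
Proof. case: k => [|k]; [rewrite en0; case: (nextC_spec 0) => // | rewrite enS; case: (nextC_spec (en k).+1) => //]. Qed.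

Lemma en_lt k : en k < en k.+1.
Proof. by rewrite enS; case: (nextC_spec (en k).+1) => _ []. Qed.

Lemma en_mono k i : k < i -> en k < en i.
Proof.
elim: i => [|i IH] //; rewrite ltnS leq_eqVlt => /orP [/eqP ->|h]; first exact: en_lt.
exact: ltn_trans (IH h) (en_lt i).
Qed.

Lemma en_le k i : en k <= en i -> k <= i.
Proof. by move=> h; rewrite leqNgt; apply/negP => /en_mono; rewrite ltnNge h. Qed.

Lemma en_inj k i : en k = en i -> k = i.
Proof. by move=> h; apply/eqP; rewrite eqn_leq; apply/andP; split; apply: en_le; rewrite h. Qed.

Lemma en_ge k : k <= en k.
Proof. by elim: k => [|k IH] //; apply: leq_ltn_trans IH (en_lt k). Qed.

Lemma en_surj c : C c -> exists k, en k = c.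
Proof.
move=> Cc.
have ex : exists k, c <= en k by exists c; apply: en_ge.
case: (ex_minnP ex) => k ck kmin; exists k; apply/eqP; rewrite eqn_leq ck andbT.
case: k ck kmin => [|j] ck kmin.
  by rewrite en0; case: (nextC_spec 0) => _ [_ h]; apply: h.
rewrite enS; case: (nextC_spec (en j).+1) => _ [_ h]; apply: h => //.
by rewrite ltnNge; apply/negP => /kmin; rewrite ltnn.
Qed.

Definition a k : nat := proj1_sig (constructive_indefinite_description _ (en_C k)).
Lemma a_spec k : kappa (a k) = en k.
Proof. exact: (proj2_sig (constructive_indefinite_description _ (en_C k))). Qed.

Lemma kappa_C d : C (kappa d). Proof. by exists d. Qed.
Definition binv d : nat := proj1_sig (constructive_indefinite_description _ (en_surj (kappa_C d))).
Lemma binv_spec d : en (binv d) = kappa d.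
Proof. exact: (proj2_sig (constructive_indefinite_description _ (en_surj (kappa_C d)))). Qed.

Lemma a_bij : bijective a.
Proof.
exists binv.
  by move=> k; apply: en_inj; rewrite binv_spec a_spec.
by move=> d; apply: kappa_inj; rewrite a_spec binv_spec.
Qed.

Lemma a_inj : injective a.
Proof. exact: bij_inj a_bij. Qed.

Definition leS (j k : nat) : Prop := (a j = a k \/ lt (a j) (a k)) /\ (j <= k).

Lemma leS_refl j : leS j j.
Proof. by split; [left|]. Qed.

Lemma leS_trans j k l : leS j k -> leS k l -> leS j l.
Proof.
move=> [h1 h2] [h3 h4]; split; last exact: leq_trans h2 h4.
case: h1 => [->|h1]; first by [].
by right; case: h3 => [<-|h3] //; apply: lt_trans h1 h3.
Qed.

Lemma key j i : y (a j) \in f0 (t (a i)) -> leS j i.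
Proof.
move=> h; split; first exact: (Yprop (t_J (a i)) h).
case: (eqVneq (a j) (a i)) => [/a_inj -> //|ne].
have ne' : a j <> a i by apply/eqP.
have := kappa_mono (closure h ne'); rewrite !a_spec.
exact: en_le.
Qed.

Lemma Ifin_down (D : Ifin leS) x z : proj1_sig D x -> leS z x -> proj1_sig D z.
Proof.
case: D => A [s hs] /= Ax zx; apply/hs.
case/hs: Ax => w [ws xw]; exists w; split => //; exact: leS_trans zx xw.
Qed.

Lemma list_bound (s : seq nat) : exists N, forall w, List.In w s -> w < N.
Proof.
elim: s => [|z s [N hN]]; first by exists 0.
exists (maxn z.+1 N) => w [<-|ws]; first by rewrite leq_max leqnn.
by rewrite leq_max (hN _ ws) orbT.
Qed.

Lemma Ifin_bound (D : Ifin leS) : exists N, forall x, proj1_sig D x -> x < N.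
Proof.
case: D => A [s hs] /=; case: (list_bound s) => N hN; exists N => x /hs [w [ws [_ xw]]].
exact: leq_ltn_trans xw (hN _ ws).
Qed.

Definition Db (D : Ifin leS) k : bool :=
  if excluded_middle_informative (proj1_sig D k) then true else false.
Lemma DbP D k : reflect (proj1_sig D k) (Db D k).
Proof. by rewrite /Db; case: (excluded_middle_informative _) => h; constructor. Qed.

Definition gmap (D : Ifin leS) : T :=
  bj [seq t (a k) | k <- iota 0 (proj1_sig (constructive_indefinite_description _ (Ifin_bound D))) & Db D k].

Lemma mem_gmap D n : n \in f0 (gmap D) <-> exists k, proj1_sig D k /\ n \in f0 (t (a k)).
Proof.
rewrite /gmap; case: (constructive_indefinite_description _ _) => N hN /=.
rewrite mem_bj; split.
  case=> z hz; case: (In_map2 hz) => k; rewrite mem_filter => /andP [Dk _] zk h.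
  by subst z; exists k; split => //; apply/(DbP D k).
case=> k [Dk h]; exists (t (a k)) => //; apply: In_map.
rewrite mem_filter mem_iota add0n (hN _ Dk) leq0n !andbT.
exact/(DbP D k).
Qed.

Lemma gmap_le D1 D2 : Ifin_le leS D1 D2 <-> le (gmap D1) (gmap D2).
Proof.
split.
  move=> h; apply/le_mem => n /mem_gmap [k [Dk hk]]; apply/mem_gmap.
  by exists k; split => //; apply: h.
move/le_mem => h x Dx.
have : y (a x) \in f0 (gmap D2) by apply: h; apply/mem_gmap; exists x; split => //; exact: y_t.
case/mem_gmap => k [Dk hk].
exact: Ifin_down Dk (key hk).
Qed.

Lemma fg_union (A1 A2 : nat -> Prop) : fg_initial leS A1 -> fg_initial leS A2 ->
  fg_initial leS (fun x => A1 x \/ A2 x).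
Proof.
move=> [s1 h1] [s2 h2]; exists (s1 ++ s2) => x; split.
  case=> [/h1|/h2] [w [ws xw]]; exists w; split => //; apply/List.in_app_iff; by [left|right].
case=> w [/List.in_app_iff [ws|ws] xw]; [left; apply/h1|right; apply/h2]; by exists w.
Qed.

Definition Uf (D1 D2 : Ifin leS) : Ifin leS :=
  exist _ _ (fg_union (proj2_sig D1) (proj2_sig D2)).

Lemma fg_empty : fg_initial leS (fun _ => False).
Proof. by exists [::] => x; split => // [[w []]]. Qed.
Definition E0 : Ifin leS := exist _ _ fg_empty.

Lemma fg_down k : fg_initial leS (fun x => leS x k).
Proof.
exists [:: k] => x; split; first by move=> h; exists k; split => //; left.
by case=> w [[<-|[]] h].
Qed.
Definition Dn k : Ifin leS := exist _ _ (fg_down k).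

Lemma Ifin_antisym (D1 D2 : Ifin leS) : Ifin_le leS D1 D2 -> Ifin_le leS D2 D1 -> D1 = D2.
Proof.
case: D1 => A1 h1; case: D2 => A2 h2 /= l1 l2.
have e : A1 = A2.
  by apply: functional_extensionality => x; apply: propositional_extensionality; split; [apply: l1|apply: l2].
subst A2; congr exist; exact: proof_irrelevance.
Qed.

Lemma Uf_lub D1 D2 : is_lub (Ifin_le leS) D1 D2 (Uf D1 D2).
Proof.
split; first by move=> x h; left.
split; first by move=> x h; right.
by move=> W l1 l2 x [h|h]; [apply: l1|apply: l2].
Qed.

Lemma E0_least : is_least (Ifin_le leS) E0.
Proof. by move=> D x []. Qed.

Lemma Ifin_in_J : in_J lt (Ifin_le leS).
Proof.
split.
  split.
    split; first by move=> D x.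
    split; first exact: Ifin_antisym.
    by move=> D1 D2 D3 l1 l2 x h; apply: l2; apply: l1.
  split; first by move=> D1 D2; exists (Uf D1 D2); apply: Uf_lub.
  by exists E0; apply: E0_least.
exists (fun A (D : Ifin leS) => forall x, proj1_sig D x -> A (a x)).
split.
  move=> A HA; split; first by exists E0 => x [].
  split; first by move=> D1 D2 l h x Dx; apply: h; apply: l.
  move=> D1 D2 h1 h2; exists (Uf D1 D2); split.
    by move=> x [h|h]; [apply: h1|apply: h2].
  by case: (Uf_lub D1 D2) => [u1 [u2 _]].
move=> A B HA HB; split.
  by move=> h D hD x Dx; apply: h; apply: hD.
move=> h n An.
have an : a (binv n) = n by apply: kappa_inj; rewrite a_spec binv_spec.
have H := h (Dn (binv n)).
rewrite -an; apply: (H _ (binv n) (leS_refl _)) => x /= [[e|l] _].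
  by rewrite e an.
by apply: (HA _ n _ An); rewrite -an.
Qed.

Lemma gmap_embed : join_embedding (Ifin_le leS) le gmap.
Proof.
split; first by move=> D1 D2; apply: gmap_le.
split.
  move=> D1 D2 D3 [l1 [l2 l3]]; split; first exact/gmap_le.
  split; first exact/gmap_le.
  move=> w h1 h2; apply/le_mem => n /mem_gmap [k [Dk hk]].
  have := l3 (Uf D1 D2); case: (Uf_lub D1 D2) => [u1 [u2 _]].
  move=> /(_ u1 u2 k Dk) [Dk'|Dk'].
    by move/le_mem: h1; apply; apply/mem_gmap; exists k.
  by move/le_mem: h2; apply; apply/mem_gmap; exists k.
move=> b hb w; apply/le_mem => n /mem_gmap [k [bk _]].
by have := hb E0 k bk.
Qed.

Lemma sierp : sierpinskisation lt nat leS.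
Proof.
exists (fun j k => a j = a k \/ lt (a j) (a k)), (fun j k => is_true (j <= k)).
split; first by exists a; split => //; exact: a_bij.
split; last by [].
exists id; split => //; by exists id.
Qed.

Lemma main_result : exists (X : Type) (leS0 : X -> X -> Prop),
    sierpinskisation lt X leS0 /\
    in_J lt (Ifin_le leS0) /\
    exists g : Ifin leS0 -> T, join_embedding (Ifin_le leS0) le g.
Proof.
exists nat, leS; split; first exact: sierp.
split; first exact: Ifin_in_J.
by exists gmap; apply: gmap_embed.
Qed.
End Main.

Theorem theorem2p5 (lt : nat -> nat -> Prop) (Halpha : strict_well_order lt)
    (T : Type) (le : T -> T -> Prop) (HP : in_J lt le) :
  (exists f : T -> {fset nat}, join_embedding le fin_subsets_le f) ->
  exists (X : Type) (leS : X -> X -> Prop),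
    sierpinskisation lt X leS /\
    in_J lt (Ifin_le leS) /\
    exists g : Ifin leS -> T, join_embedding (Ifin_le leS) le g.
Proof.
case: HP => [[_ [HJ Hbot]] [F [HFid HFiff]]] [f0 Hf0].
case: Halpha => [irr [tr [tot wf]]].
exact: (main_result irr tr tot wf HJ Hbot HFid HFiff Hf0).
Qed.
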